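(* Let $n$ be odd, let $A$ be a finite set of alternatives, and let $P=(P_1,\ldots,P_n)$ be a profile of linear orders on $A$ held by voters $V=\{1,\ldots,n\}$. If $P$ is single-crossing with respect to a tree $T=(V,E)$ whose vertex set is the set of voters, then there exists $i\in\{1,\ldots,n\}$ such that the preference order $P_i$ coincides with the majority relation of $P$.
   Context: A profile is an $n$-tuple of (strict) linear orders on $A$; voter $i$ prefers $a$ to $b$, written $a\succ_i b$, if $aP_ib$. The majority relation of $P$: $a\succeq b$ iff $|\{i: a\succ_i b\}|\ge|\{i: b\succ_i a\}|$; for $n$ odd this is a complete asymmetric relation, with $a\succ b$ iff a strict majority of voters prefers $a$ to $b$. Given a tree $T=(V,E)$ on the voter set, $P$ is single-crossing with respect to $T$ if for every pair of distinct alternatives $a,b\in A$ one of the following holds: (i) there is an edge $e\in E$ (an ''$ab$-cut'') such that, removing $e$ from $T$, the two resulting subtrees have vertex sets $V_1,V_2$ with all voters in $V_1$ preferring $a$ to $b$ and all voters in $V_2$ preferring $b$ to $a$; or (ii) all voters prefer $a$ to $b$, or all voters prefer $b$ to $a$ (a ''virtual'' cut). *)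

(* Defs.v *)
From mathcomp Require Import all_boot.
Set Implicit Arguments. Unset Strict Implicit. Unset Printing Implicit Defensive.

Definition strict_linear_order (A : finType) (r : rel A) : Prop :=
  irreflexive r /\ transitive r /\ (forall a b, a != b -> r a b || r b a).

Definition remove_edge (T : finType) (e : rel T) (u v : T) : rel T :=
  [rel x y | e x y && ~~ (((x == u) && (y == v)) || ((x == v) && (y == u)))].

(* A (simple, undirected) tree on the vertex set T: symmetric irreflexive
   edge relation, connected, and minimally connected (every edge is a bridge,
   i.e. the graph is acyclic). *)
Definition is_tree (T : finType) (e : rel T) : Prop :=
  symmetric e /\ irreflexive e /\
  (forall x y, connect e x y) /\
  (forall u v, e u v -> ~~ connect (remove_edge e u v) u v).

(* An ab-cut: an edge {u,v} such that after removing it, the component V1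
   of u prefers a to b, and the rest V2 (the component of v) prefers b to a. *)
Definition ab_cut (n : nat) (A : finType) (e : rel 'I_n) (P : 'I_n -> rel A)
    (a b : A) : Prop :=
  exists u v, e u v /\
    forall i : 'I_n,
      (connect (remove_edge e u v) u i -> P i a b) /\
      (~~ connect (remove_edge e u v) u i -> P i b a).

Definition single_crossing (n : nat) (A : finType) (e : rel 'I_n)
    (P : 'I_n -> rel A) : Prop :=
  forall a b : A, a != b ->
    ab_cut e P a b \/ (forall i, P i a b) \/ (forall i, P i b a).

(* Strict majority relation: a strict majority of voters prefers a to b
   (for n odd this is the strict part of the weak majority relation). *)
Definition majority (n : nat) (A : finType) (P : 'I_n -> rel A) : rel A :=
  fun a b => #|[set i | P i b a]| < #|[set i | P i a b]|.

(* Main.v *)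
Require Import Defs.
From mathcomp Require Import all_boot.
From mathcomp Require Import zify.
Set Implicit Arguments. Unset Strict Implicit.

Lemma conn_closed (T: finType) (r: rel T) (Q: pred T) w i :
  Q w -> (forall j k, Q j -> r j k -> Q k) -> connect r w i -> Q i.
Proof.
move=> Qw cl /connectP [s pth ->]; elim: s w Qw pth => [|x s IH] w Qw //= /andP [rwx pth].
exact: IH (cl _ _ Qw rwx) pth.
Qed.

Lemma conn_mono (T: finType) (r1 r2: rel T) w i :
  (forall j k, connect r1 w j -> r1 j k -> r2 j k) -> connect r1 w i -> connect r2 w i.
Proof.
move=> H Hi.
suff: connect r1 w i && connect r2 w i by case/andP.
apply: (@conn_closed _ r1 (fun j => connect r1 w j && connect r2 w j)) Hi; first by rewrite !connect0.
move=> j k /andP [c1 c2] rjk; apply/andP; split.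
- exact: connect_trans c1 (connect1 rjk).
- exact: connect_trans c2 (connect1 (H _ _ c1 rjk)).
Qed.

Definition side n (e : rel 'I_n) u v := [set i | connect (remove_edge e u v) u i].

Lemma rem_sym n (e : rel 'I_n) u v : remove_edge e v u =2 remove_edge e u v.
Proof. by move=> x y; rewrite /remove_edge /= orbC. Qed.

Lemma rem_symm n (e : rel 'I_n) u v : symmetric e -> symmetric (remove_edge e u v).
Proof.
move=> es x y; rewrite /remove_edge /= es.
by case: (x == u); case: (y == v); case: (x == v); case: (y == u).
Qed.

Lemma side_compl n (e : rel 'I_n) u v : is_tree e -> e u v ->
  forall i, (i \in side e v u) = (i \notin side e u v).
Proof.
case=> es [_ [econn ebr]] euv i.
have eq := eq_connect (rem_sym e u v).
have symr : connect_sym (remove_edge e u v) := sym_connect_sym (rem_symm u v es).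
rewrite !inE eq.
apply/idP/idP.
- move=> cvi; apply/negP=> cui; move: (ebr _ _ euv).
  by rewrite (connect_trans cui _) // symr.
- move=> ncui.
  have: (fun j => connect (remove_edge e u v) u j || connect (remove_edge e u v) v j) i.
    apply: (@conn_closed _ e (fun j => connect (remove_edge e u v) u j || connect (remove_edge e u v) v j)) (econn u i); first by rewrite connect0.
    move=> j k /= cj ejk.
    have [H|H] := boolP (((j == u) && (k == v)) || ((j == v) && (k == u))).
      by case/orP: H => /andP [_ /eqP ->]; rewrite connect0 ?orbT.
    have r : remove_edge e u v j k by rewrite /remove_edge /= ejk H.
    by case/orP: cj => c; rewrite (connect_trans c (connect1 r)) ?orbT.
  by rewrite /= (negbTE ncui).
Qed.

Lemma side_sub n (e : rel 'I_n) p q a b :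
  (a \notin side e p q) || (b \notin side e p q) -> p \in side e a b ->
  {subset side e p q <= side e a b}.
Proof.
move=> hab pab i; rewrite !inE => cpi; move: pab; rewrite inE => cap.
apply: connect_trans cap _; apply: conn_mono cpi => j k cpj rjk.
have cpk := connect_trans cpj (connect1 rjk).
move: rjk; rewrite /remove_edge /= => /andP [ejk _]; rewrite ejk /=.
apply/negP => /orP [/andP [/eqP ja /eqP kb] | /andP [/eqP jb /eqP ka]]; subst;
  by move: hab; rewrite !inE cpj cpk.
Qed.

Lemma centroid n (e : rel 'I_n) : odd n -> is_tree e ->
  exists c : 'I_n, forall u v, e u v -> (c \in side e u v) = (n < (#|side e u v|).*2).
Proof.
move=> on tr; have [es [eirr [econn ebr]]] := tr.
have hn : n = (n./2).*2.+1 by rewrite -[LHS]odd_double_half on add1n.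
have sz : forall u v, e u v -> #|side e v u| = n - #|side e u v|.
  move=> u v euv; have ->: side e v u = ~: side e u v.
    by apply/setP=> i; rewrite in_setC side_compl.
  have := cardsC (side e u v); rewrite card_ord; lia.
have le : forall u v, #|side e u v| <= n.
  by move=> u v; rewrite -[X in _ <= X]card_ord; exact: max_card.
have one_large : forall u v, e u v ->
    (n < #|side e v u|.*2) = ~~ (n < #|side e u v|.*2).
  move=> u v euv; rewrite sz //; have := le u v.
  case: (ltnP n (#|side e u v|.*2)) => /= h1 h2; apply/idP; lia.
have F1 : forall u v, u \in side e u v by move=> u v; rewrite inE connect0.
have n0 : 0 < n by rewrite hn.
case: (pickP (fun p : 'I_n * 'I_n => e p.1 p.2 && (n < #|side e p.1 p.2|.*2)))
  => [p0 Hp0 | none]; last first.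
  exists (Ordinal n0) => u v euv; exfalso.
  have := none (u, v); have := none (v, u); rewrite /= (es v u) euv /= one_large //.
  by case: (n < _).
case: (@arg_minnP _ p0 (fun p : 'I_n * 'I_n => e p.1 p.2 && (n < #|side e p.1 p.2|.*2)) (fun p : 'I_n * 'I_n => #|side e p.1 p.2|) Hp0)
  => [[u v] /= /andP [euv large] minp].
exists u.
have claim : forall x y, e x y -> n < #|side e x y|.*2 -> u \in side e x y.
  move=> x y exy lxy; apply/negPn/negP => nu.
  have eyx : e y x by rewrite es.
  have uyx : u \in side e y x by rewrite side_compl.
  case: (boolP (x \in side e u v)) => hx.
  - have vyx : v \in side e y x.
      move: uyx; rewrite !inE => c; apply: connect_trans c (connect1 _).
      rewrite /remove_edge /= euv /=.
      have ux : (u == x) = false.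
        by apply/negbTE/negP => /eqP ux; subst; rewrite F1 in nu.
      have vx : (v == x) = false.
        apply/negbTE/negP => /eqP vx; subst.
        by move: hx; rewrite inE; apply/negP; apply: ebr.
      by rewrite ux vx !andbF.
    have sub := side_sub (p := v) (q := u) (a := y) (b := x).
    have sub' : {subset side e v u <= side e y x}.
      by apply: sub => //; rewrite (side_compl tr euv x) hx orbT.
    have pr : side e x y \proper side e u v.
      apply/properP; split; last by exists u.
      apply/subsetP => i ixy.
      have : i \notin side e y x by rewrite -side_compl.
      apply: contraR => niuv; apply: sub'; by rewrite side_compl.
    have := minp (x, y); rewrite /= exy lxy => /(_ isT).
    by rewrite leqNgt (proper_card pr).
  - have sub : {subset side e u v <= side e y x}.
      by apply: side_sub => //; rewrite hx orbT.
    have ss : side e u v \subset side e y x by apply/subsetP.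
    have := subset_leq_card ss.
    rewrite (sz x y exy); have := le x y.
    move: large lxy; move: #|side e u v| #|side e x y| => A B; lia.
move=> x y exy.
case: (boolP (n < _)) => h; first by rewrite claim.
have eyx : e y x by rewrite es.
have := claim y x eyx; rewrite one_large // h => /(_ isT) uyx.
by apply/negbTE; rewrite -side_compl.
Qed.

Theorem theorem1 (n : nat) (A : finType) (P : 'I_n -> rel A) (e : rel 'I_n) :
  odd n ->
  (forall i, strict_linear_order (P i)) ->
  is_tree e ->
  single_crossing e P ->
  exists i : 'I_n, forall a b : A, P i a b = majority P a b.
Proof.
move=> on lin tr sc.
have [c Hc] := centroid on tr.
have n0 : 0 < n by case: n on {c Hc sc tr e P lin}.
exists c => a b.
have asym : forall i x y, P i x y -> ~~ P i y x.
  move=> i x y pxy; apply/negP => pyx.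
  have [irr [trn _]] := lin i.
  by move: (trn _ _ _ pxy pyx); rewrite irr.
case: (eqVneq a b) => [<-|nab].
  by have [irr _] := lin c; rewrite irr /majority ltnn.
case: (sc a b nab) => [[u [v [euv H]]] | [allab | allba]].
- have E1 : [set i | P i a b] = side e u v.
    apply/setP=> i; rewrite !inE.
    case: (boolP (connect _ u i)) => h; first exact: (H i).1.
    exact/negbTE/asym/((H i).2 h).
  have E2 : [set i | P i b a] = ~: side e u v.
    apply/setP=> i; rewrite !inE.
    case: (boolP (connect _ u i)) => h /=; last exact: (H i).2.
    exact/negbTE/asym/((H i).1 h).
  have Pc : P c a b = (c \in side e u v) by rewrite -E1 inE.
  rewrite /majority E1 E2 Pc Hc //.
  have := cardsC (side e u v); rewrite card_ord.
  move: #|side e u v| #|~: side e u v| => X Y h.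
  apply/idP/idP; lia.
- rewrite allab /majority.
  have -> : [set i | P i b a] = set0.
    by apply/setP=> i; rewrite !inE (negbTE (asym _ _ _ (allab i))).
  have -> : [set i | P i a b] = setT by apply/setP=> i; rewrite !inE allab.
  by rewrite cards0 cardsT card_ord.
- rewrite (negbTE (asym _ _ _ (allba c))) /majority.
  have -> : [set i | P i a b] = set0.
    by apply/setP=> i; rewrite !inE (negbTE (asym _ _ _ (allba i))).
  by rewrite cards0.
Qed.
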